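(* For every $n\ge1$: if $\Psi_n\in\mathrm{LTL}[\mathsf{X},\mathsf{wX},\mathsf{F},\mathsf{G}]$ satisfies $\Psi_n\equiv\Phi_n$ (i.e. $\mathcal L(\Psi_n)=\mathcal L(\Phi_n)$), then $\mathrm{size}(\Psi_n)\ge 2^n$.
   Context: Fix $n\ge1$ and atomic propositions $AP=\{\tilde p,\tilde q\}\cup\{p_1,\dots,p_n\}\cup\{q_1,\dots,q_n\}$ (all distinct), $\Sigma=2^{AP}$. Formulae in negation normal form are built from literals $p,\neg p$ ($p\in AP$) with $\land,\lor$ and temporal operators, interpreted on finite non-empty traces $\sigma\in\Sigma^+$ at positions $0\le i<|\sigma|$: $\mathsf{X}\phi$: $i+1<|\sigma|$ and $\phi$ at $i+1$; $\mathsf{wX}\phi$: $i+1=|\sigma|$ or $\phi$ at $i+1$; $\mathsf{F}\phi$/$\mathsf{G}\phi$: $\phi$ at some/every $j$ with $i\le j<|\sigma|$; $\mathsf O\phi$: $\phi$ at some $0\le j\le i$. $\mathcal L(\phi)=\{\sigma\in\Sigma^+:\sigma,0\models\phi\}$. $\mathrm{LTL}[\mathsf{X},\mathsf{wX},\mathsf{F},\mathsf{G}]$ is the set of such formulae using only temporal operators $\mathsf{X},\mathsf{wX},\mathsf{F},\mathsf{G}$. Size: literals 1, unary operators add 1, binary connectives sum sizes plus 1. $\Phi_n := \mathsf{F}\big(\tilde q\land\bigwedge_{i=1}^n\big((q_i\land\mathsf{O}(\tilde p\land p_i))\lor(\neg q_i\land\mathsf{O}(\tilde p\land\neg p_i))\big)\big)$.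 *)

(* Defs.v *)
From mathcomp Require Import all_boot.
Set Implicit Arguments. Unset Strict Implicit. Unset Printing Implicit Defensive.

(* Atomic propositions for parameter n: ~p, ~q, p_1..p_n, q_1..q_n
   (indices shifted to 0..n-1 via 'I_n). All distinct by construction. *)
Inductive AP (n : nat) : Type :=
| Ptil | Qtil | Pi of 'I_n | Qi of 'I_n.
Arguments Ptil {n}. Arguments Qtil {n}.

(* A letter of Sigma = 2^AP, given by its characteristic function. *)
Definition letter (A : Type) := A -> bool.

(* LTL formulae in negation normal form over atoms A. *)
Inductive form (A : Type) : Type :=
| Lit of bool & A          (* Lit true a = a, Lit false a = ~a *)
| And of form A & form A
| Or of form A & form A
| Xn of form A
| WX of form A
| Fn of form A
| Gn of form A
| On of form A.

(* Semantics on finite traces s at position i (only used for i < size s). *)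
Fixpoint sat (A : Type) (s : seq (letter A)) (i : nat) (phi : form A) : Prop :=
  match phi with
  | Lit b a => nth (fun _ => false) s i a = b
  | And f g => sat s i f /\ sat s i g
  | Or f g => sat s i f \/ sat s i g
  | Xn f => i.+1 < size s /\ sat s i.+1 f
  | WX f => i.+1 = size s \/ sat s i.+1 f
  | Fn f => exists j, i <= j < size s /\ sat s j f
  | Gn f => forall j, i <= j < size s -> sat s j f
  | On f => exists j, j <= i /\ sat s j f
  end.

Definition lang (A : Type) (phi : form A) (s : seq (letter A)) : Prop :=
  s <> [::] /\ sat s 0 phi.

Fixpoint in_XwXFG (A : Type) (phi : form A) : bool :=
  match phi with
  | Lit _ _ => true
  | And f g | Or f g => in_XwXFG f && in_XwXFG g
  | Xn f | WX f | Fn f | Gn f => in_XwXFG f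
  | On _ => false
  end.

Fixpoint fsize (A : Type) (phi : form A) : nat :=
  match phi with
  | Lit _ _ => 1
  | And f g | Or f g => (fsize f + fsize g).+1
  | Xn f | WX f | Fn f | Gn f | On f => (fsize f).+1
  end.

(* Finite conjunction of a non-empty list (the value on [::] is irrelevant:
   it is only used with n >= 1). *)
Fixpoint bigAnd (A : Type) (d : form A) (l : seq (form A)) : form A :=
  match l with
  | [::] => d
  | [:: x] => x
  | x :: xs => And x (bigAnd d xs)
  end.

Definition conj_i (n : nat) (i : 'I_n) : form (AP n) :=
  Or (And (Lit true (Qi i)) (On (And (Lit true Ptil) (Lit true (Pi i)))))
     (And (Lit false (Qi i)) (On (And (Lit true Ptil) (Lit false (Pi i))))).

Definition Phi (n : nat) : form (AP n) :=
  Fn (And (Lit true Qtil) (bigAnd (Lit true Qtil) [seq conj_i i | i <- enum 'I_n])).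

(* Main.v *)
Require Import Defs.
From mathcomp Require Import all_boot.
From mathcomp Require Import zify.
From Stdlib Require Import ClassicalEpsilon.

Set Implicit Arguments. Unset Strict Implicit. Unset Printing Implicit Defensive.

Section Aux.
Variable A : Type.

Fixpoint atoms (f : form A) : seq (form A) :=
  match f with
  | Lit _ _ => [::]
  | And f g | Or f g => atoms f ++ atoms g
  | Xn f | WX f => [:: f]
  | Fn f => Fn f :: atoms f
  | Gn f => Gn f :: atoms f
  | On f => [::]
  end.

Lemma atoms_size f : size (atoms f) <= fsize f.
Proof.
elim: f => [b a|f IHf g IHg|f IHf g IHg|f IHf|f IHf|f IHf|f IHf|f IHf] //=;
  rewrite ?size_cat ?ltnS //; by [apply: leq_add | apply: leqW; apply: leq_add].
Qed.

Lemma shift (f : form A) : in_XwXFG f ->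
  forall a w i, sat (a :: w) i.+1 f <-> sat w i f.
Proof.
elim: f => [b x|f IHf g IHg|f IHf g IHg|f IHf|f IHf|f IHf|f IHf|f IHf] //=.
- move=> /andP[hf hg] a w i; rewrite IHf // IHg //.
- move=> /andP[hf hg] a w i; rewrite IHf // IHg //.
- move=> hf a w i; rewrite IHf // ltnS; tauto.
- move=> hf a w i; rewrite IHf //; split; case=> h;
    [left; by case: h | by right | left; by rewrite h | by right].
- move=> hf a w i; split.
  + case=> [[|j]] [/andP[h1 h2]] //; rewrite IHf // => h; exists j; split=> //.
    by apply/andP; split.
  + case=> j [/andP[h1 h2] h]; exists j.+1; split; first by apply/andP; split.
    by rewrite IHf.
- move=> hf a w i; split.
  + move=> h j /andP[h1 h2]; rewrite -(IHf hf a); apply: h; by apply/andP.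
  + move=> h [|j] /andP[h1 h2] //; rewrite IHf //; apply: h; by apply/andP.
Qed.

Lemma InP (x : form A) l d : List.In x l -> exists2 j, j < size l & nth d l j = x.
Proof.
elim: l => //= y l IH [->|h]; first by exists 0.
by case: (IH h) => j h1 h2; exists j.+1.
Qed.

Lemma key (f : form A) : in_XwXFG f -> forall a w w', w <> [::] -> w' <> [::] ->
  (forall c, List.In c (atoms f) -> (sat w 0 c <-> sat w' 0 c)) ->
  (sat (a :: w) 0 f <-> sat (a :: w') 0 f).
Proof.
elim: f => [b x|f IHf g IHg|f IHf g IHg|f IHf|f IHf|f IHf|f IHf|f IHf] //=.
- move=> /andP[hf hg] a w w' nw nw' H.
  have h1 := IHf hf a w w' nw nw' (fun c hc => H c (List.in_or_app _ _ _ (or_introl hc))).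
  have h2 := IHg hg a w w' nw nw' (fun c hc => H c (List.in_or_app _ _ _ (or_intror hc))).
  by rewrite h1 h2.
- move=> /andP[hf hg] a w w' nw nw' H.
  have h1 := IHf hf a w w' nw nw' (fun c hc => H c (List.in_or_app _ _ _ (or_introl hc))).
  have h2 := IHg hg a w w' nw nw' (fun c hc => H c (List.in_or_app _ _ _ (or_intror hc))).
  by rewrite h1 h2.
- move=> hf a w w' nw nw' H.
  rewrite (shift hf a w 0) (shift hf a w' 0) (H f (or_introl erefl)).
  case: w nw {H} => // ? ? _; case: w' nw' => // ? ? _ /=; tauto.
- move=> hf a w w' nw nw' H.
  rewrite (shift hf a w 0) (shift hf a w' 0) (H f (or_introl erefl)).
  case: w nw {H} => // ? ? _; case: w' nw' => // ? ? _ /=.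
  by split; case=> h; try (by right); case: h.
- move=> hf a w w' nw nw' H.
  have E : forall w0, (exists j, j < (size w0).+1 /\ sat (a :: w0) j f) <->
     sat (a :: w0) 0 f \/ sat (a :: w0) 1 (Fn f).
    move=> w0 /=; split.
    + case=> [[|j]] [h1 h2]; [by left | right; exists j.+1; split => //].
    + case=> [h|[j [/andP[h1 h2] h]]]; first by exists 0.
      by exists j; split => //; case/andP: h1.
  have h1 := IHf hf a w w' nw nw' (fun c hc => H c (or_intror hc)).
  have h2 := H (Fn f) (or_introl erefl).
  by rewrite !E h1 (shift (f := Fn f) hf a w 0) (shift (f := Fn f) hf a w' 0) h2.
- move=> hf a w w' nw nw' H.
  have E : forall w0, (forall j, j < (size w0).+1 -> sat (a :: w0) j f) <->
     sat (a :: w0) 0 f /\ sat (a :: w0) 1 (Gn f).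
    move=> w0 /=; split.
    + move=> h; split; first by apply: h.
      move=> j hj; apply: h; by case/andP: hj.
    + case=> h h' [|j] hj //; apply: h'; move: hj; by [].
  have h1 := IHf hf a w w' nw nw' (fun c hc => H c (or_intror hc)).
  have h2 := H (Gn f) (or_introl erefl).
  by rewrite !E h1 (shift (f := Gn f) hf a w 0) (shift (f := Gn f) hf a w' 0) h2.
Qed.

End Aux.

Definition pb (P : Prop) : bool := if excluded_middle_informative P then true else false.

Lemma pbP P Q : pb P = pb Q -> (P <-> Q).
Proof.
rewrite /pb; case: excluded_middle_informative; case: excluded_middle_informative => //;
  tauto.
Qed.

Section Main.
Variable n : nat.
Notation V := {ffun 'I_n -> bool}.
Definition dl : letter (AP n) := fun _ => false.
Definition la (u : V) : letter (AP n) :=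
  fun x => match x with Ptil => true | Pi i => u i | _ => false end.
Definition lb (v : V) : letter (AP n) :=
  fun x => match x with Qtil => true | Qi i => v i | _ => false end.
Definition eT (T : {ffun V -> bool}) := [seq v <- enum V | T v].
Definition wT (T : {ffun V -> bool}) := map lb (eT T) ++ [:: dl].
Definition u0 : V := [ffun=> false].

Lemma wT_nth T k : nth dl (wT T) k =
  if k < size (eT T) then lb (nth u0 (eT T) k) else dl.
Proof.
rewrite /wT nth_cat size_map; case: ifP => h; first by rewrite (nth_map u0).
by case: (k - _) => [|[]].
Qed.

Lemma Ptil_nth u T j : nth dl (la u :: wT T) j Ptil = true -> j = 0.
Proof. case: j => //= k; rewrite wT_nth; by case: ifP. Qed.

Lemma conj_sem u T j i :
  sat (la u :: wT T) j (conj_i i) <-> nth dl (la u :: wT T) j (Qi i) = u i.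
Proof.
rewrite /conj_i /=; split.
- case=> [[-> [j' [_ [/Ptil_nth Hp Hpi]]]]|[-> [j' [_ [/Ptil_nth Hp Hpi]]]]];
    by move: Hpi; rewrite Hp /=.
- move=> h; case Hu: (u i); [left|right]; (split; first by rewrite h);
    exists 0; split => //; by rewrite /= Hu.
Qed.

Lemma bigAnd_sem (B : Type) (f : 'I_n -> form B) d (r : seq 'I_n) s j : r != [::] ->
  (sat s j (bigAnd d [seq f i | i <- r]) <-> forall i, i \in r -> sat s j (f i)).
Proof.
elim: r => //= x r IH _; case: r IH => [|y r] IH /=.
- split; first by move=> h i; rewrite inE => /eqP ->.
  by move=> h; apply: h; rewrite inE.
- rewrite IH //; split.
  + case=> h1 h2 i; rewrite inE => /orP[/eqP ->//|]; exact: h2.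
  + move=> h; split; first by apply: h; rewrite inE eqxx.
    by move=> i hi; apply: h; rewrite inE hi orbT.
Qed.

Lemma Phi_sem (hn : 1 <= n) u T : lang (Phi n) (la u :: wT T) <-> T u.
Proof.
have ne : enum 'I_n != [::].
  by rewrite -size_eq0 size_enum_ord -lt0n.
rewrite /lang /Phi /=; split.
- case=> _ [[|k] [Hj [Hq Hb]]] //.
  move: Hq Hb; rewrite /= wT_nth; case: ifP => hk // _.
  move/(bigAnd_sem _ _ _ _ ne) => Hb.
  have tin : nth u0 (eT T) k \in eT T by rewrite mem_nth.
  have -> : u = nth u0 (eT T) k.
    apply/ffunP => i; have := Hb i; rewrite mem_enum => /(_ isT).
    by rewrite conj_sem /= wT_nth hk /=.
  by move: tin; rewrite mem_filter => /andP[].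
- move=> Tu; split => //.
  have uin : u \in eT T by rewrite mem_filter Tu mem_enum.
  exists (index u (eT T)).+1; split.
    by rewrite /= /wT size_cat size_map /= ltnS addn1 ltnS ltnW // index_mem.
  rewrite /= wT_nth index_mem uin nth_index //; split => //.
  apply/(bigAnd_sem _ _ _ _ ne) => i _.
  by rewrite conj_sem /= wT_nth index_mem uin nth_index.
Qed.

End Main.

Theorem lemma5 (n : nat) (hn : 1 <= n) (Psi : form (AP n)) :
  in_XwXFG Psi ->
  (forall s : seq (letter (AP n)), lang Psi s <-> lang (Phi n) s) ->
  2 ^ n <= fsize Psi.
Proof.
move=> hPsi Heq.
set at0 := atoms Psi; set k := size at0.
pose sigf (T : {ffun {ffun 'I_n -> bool} -> bool}) : {ffun 'I_k -> bool} :=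
  [ffun j : 'I_k => pb (sat (wT T) 0 (nth (Lit true Qtil) at0 j))].
have inj : injective sigf.
  move=> T1 T2 hs; apply/ffunP => u.
  have H : forall c, List.In c at0 -> (sat (wT T1) 0 c <-> sat (wT T2) 0 c).
    move=> c /(InP (Lit true Qtil)) [j hj <-].
    apply: pbP; have := congr1 (fun g : {ffun 'I_k -> bool} => g (Ordinal hj)) hs; by rewrite !ffunE.
  have E : forall T : {ffun {ffun 'I_n -> bool} -> bool}, T u <-> sat (la u :: wT T) 0 Psi.
    move=> T; rewrite -Phi_sem // -Heq /lang; split; [case=> //|by split].
  have : T1 u <-> T2 u.
    rewrite !E; apply: key => //; by rewrite /wT; case: (map _ _).
  by case=> h1 h2; apply/idP/idP; [exact: h1 | exact: h2].
have := leq_card _ inj; rewrite !card_ffun !card_bool card_ord leq_exp2l // => h.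
rewrite card_ord in h; apply: (leq_trans h); exact: atoms_size.
Qed.
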